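(* Let $\Pi_1,\Pi_2$ be programs over a function-free signature $\mathcal L$. Then $\Pi_1\equiv_u\Pi_2$ if and only if for every function-free signature $\mathcal L'\supseteq\mathcal L$ and every set $A$ of ground atoms of $\mathcal L'$, the programs $\Pi_1\cup A$ and $\Pi_2\cup A$ have the same generalized answer sets.
   Context: $\mathcal L=\langle\mathcal F,\mathcal P\rangle$ is a function-free first-order signature without equality ($\mathcal F$ consists of object constants). A rule has the form $a_1\vee\dots\vee a_k\vee\neg a_{k+1}\vee\dots\vee\neg a_l\leftarrow b_1,\dots,b_m,\neg b_{m+1},\dots,\neg b_n$ with atoms possibly containing variables, $l\ge k\ge0$, $n\ge m\ge0$, $l+n>0$; a program is a set of rules. A rule is identified with the sentence $\forall\vec x(\beta_r\to\alpha_r)$ where $\vec x$ are its variables, $\alpha_r$ the disjunction of its head literals ($\bot$ if empty), $\beta_r$ the conjunction of its body literals ($\top$ if empty), $\neg p$ read as $p\to\bot$; a program is identified with the theory of its rules, and a ground atom with the corresponding fact. For a universe $\mathcal U$, $\mathcal C_{\mathcal U}=\{c_\varepsilon\}$ are fresh names and $\mathrm{At}(\mathcal P,\mathcal U)$ the atoms over $\mathcal P$ and $\mathcal C_{\mathcal U}$. A QHT-interpretation is $\langle I,J,K\rangle$ with $I$ interpreting the constants on $\mathcal U$ ($I(c_\varepsilon)=\varepsilon$) and $J\subseteq K\subseteq\mathrm{At}(\mathcal P,\mathcal U)$. Satisfaction by $M=\langle I,J,K\rangle$: $M\models p(t_1,..,t_n)$ iff $p(c_{t_1^I},..,c_{t_n^I})\in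 J$; $M\not\models\bot$; $\wedge,\vee$ componentwise; $M\models\phi\to\psi$ iff ($M\not\models\phi$ or $M\models\psi$) and $\langle I,K\rangle\models\phi\to\psi$ classically ($\langle I,K\rangle$ makes exactly $K$ true); $M\models\forall x\phi(x)$ iff $M\models\phi(c_\varepsilon)$ and $\langle I,K\rangle\models\phi(c_\varepsilon)$ for all $\varepsilon$; $M\models\exists x\phi(x)$ iff $M\models\phi(c_\varepsilon)$ for some $\varepsilon$. $\langle I,K\rangle$ (on any universe) is a generalized answer set of a program/theory $\Gamma$ iff $\langle I,K,K\rangle\models\Gamma$ and $\langle I,J,K\rangle\not\models\Gamma$ for all $J\subsetneq K$. A sentence is factual if built from atoms and $\bot$ using only $\wedge,\vee,\forall,\exists$ and implications $\phi\to\bot$. $\Pi_1\equiv_u\Pi_2$ iff for every function-free $\mathcal L'\supseteq\mathcal L$ and every factual theory $\Gamma$ over $\mathcal L'$, $\Pi_1\cup\Gamma$ and $\Pi_2\cup\Gamma$ have the same generalized answer sets. *)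

(* Defs.v *)
From Stdlib Require Import List Arith PeanoNat.
Import ListNotations.

Record signature := mkSig {
  Cst : Type;
  Prd : Type;
  ar  : Prd -> nat
}.

(* L' ⊇ L : an arity-preserving injective embedding of the symbols of L into L' *)
Record ext (L L' : signature) := mkExt {
  ec : Cst L -> Cst L';
  ep : Prd L -> Prd L';
  ec_inj : forall c d, ec c = ec d -> c = d;
  ep_inj : forall p q, ep p = ep q -> p = q;
  ep_ar  : forall p, ar L' (ep p) = ar L p
}.
Arguments ec {L L'} _ _.
Arguments ep {L L'} _ _.

Inductive term (L : signature) : Type :=
| TVar : nat -> term L
| TCst : Cst L -> term L.
Arguments TVar {L} _.
Arguments TCst {L} _.

Inductive form (L : signature) : Type :=
| FAtom : Prd L -> list (term L) -> form L
| FBot  : form L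
| FAnd  : form L -> form L -> form L
| FOr   : form L -> form L -> form L
| FImp  : form L -> form L -> form L
| FAll  : nat -> form L -> form L
| FEx   : nat -> form L -> form L.
Arguments FAtom {L} _ _.
Arguments FBot {L}.
Arguments FAnd {L} _ _.
Arguments FOr {L} _ _.
Arguments FImp {L} _ _.
Arguments FAll {L} _ _.
Arguments FEx {L} _ _.

Definition FNeg {L} (f : form L) : form L := FImp f FBot.
Definition FTop {L} : form L := FImp FBot FBot.

Definition term_vars {L} (t : term L) : list nat :=
  match t with TVar x => [x] | TCst _ => [] end.

Fixpoint fv {L} (f : form L) : list nat :=
  match f with
  | FAtom _ ts => flat_map term_vars ts
  | FBot => []
  | FAnd g h | FOr g h | FImp g h => fv g ++ fv h
  | FAll x g | FEx x g => remove Nat.eq_dec x (fv g)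
  end.

Definition sentence {L} (f : form L) : Prop := fv f = [].

Fixpoint wf_form {L} (f : form L) : Prop :=
  match f with
  | FAtom p ts => length ts = ar L p
  | FBot => True
  | FAnd g h | FOr g h | FImp g h => wf_form g /\ wf_form h
  | FAll _ g | FEx _ g => wf_form g
  end.

Inductive factual {L} : form L -> Prop :=
| fact_atom : forall p ts, factual (FAtom p ts)
| fact_bot  : factual FBot
| fact_and  : forall f g, factual f -> factual g -> factual (FAnd f g)
| fact_or   : forall f g, factual f -> factual g -> factual (FOr f g)
| fact_neg  : forall f, factual f -> factual (FImp f FBot)
| fact_all  : forall x f, factual f -> factual (FAll x f)
| fact_ex   : forall x f, factual f -> factual (FEx x f).

Definition theory (L : signature) := form L -> Prop.

Definition factual_theory {L} (G : theory L) : Prop :=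
  forall f, G f -> factual f /\ sentence f /\ wf_form f.

Definition union {L} (G1 G2 : theory L) : theory L := fun f => G1 f \/ G2 f.

Definition rename_term {L L'} (e : ext L L') (t : term L) : term L' :=
  match t with TVar x => TVar x | TCst c => TCst (ec e c) end.

Fixpoint rename_form {L L'} (e : ext L L') (f : form L) : form L' :=
  match f with
  | FAtom p ts => FAtom (ep e p) (map (rename_term e) ts)
  | FBot => FBot
  | FAnd g h => FAnd (rename_form e g) (rename_form e h)
  | FOr g h => FOr (rename_form e g) (rename_form e h)
  | FImp g h => FImp (rename_form e g) (rename_form e h)
  | FAll x g => FAll x (rename_form e g)
  | FEx x g => FEx x (rename_form e g)
  end.

Definition patom (L : signature) := (Prd L * list (term L))%type.
Definition patom_form {L} (a : patom L) : form L := FAtom (fst a) (snd a).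

(* a1 ∨ ... ∨ ak ∨ ¬a_{k+1} ∨ ... ∨ ¬a_l ← b1,...,bm, ¬b_{m+1},...,¬b_n *)
Record rule (L : signature) := mkRule {
  hpos : list (patom L);
  hneg : list (patom L);
  bpos : list (patom L);
  bneg : list (patom L)
}.
Arguments hpos {L} _.
Arguments hneg {L} _.
Arguments bpos {L} _.
Arguments bneg {L} _.

Fixpoint conj_list {L} (fs : list (form L)) : form L :=
  match fs with
  | [] => FTop
  | [f] => f
  | f :: fs' => FAnd f (conj_list fs')
  end.

Fixpoint disj_list {L} (fs : list (form L)) : form L :=
  match fs with
  | [] => FBot
  | [f] => f
  | f :: fs' => FOr f (disj_list fs')
  end.

Definition rule_body {L} (r : rule L) : form L :=
  conj_list (map patom_form (bpos r) ++ map (fun a => FNeg (patom_form a)) (bneg r)).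
Definition rule_head {L} (r : rule L) : form L :=
  disj_list (map patom_form (hpos r) ++ map (fun a => FNeg (patom_form a)) (hneg r)).

Definition uclose {L} (f : form L) : form L :=
  fold_right FAll f (nodup Nat.eq_dec (fv f)).

Definition rule_form {L} (r : rule L) : form L :=
  uclose (FImp (rule_body r) (rule_head r)).

Definition patom_wf {L} (a : patom L) : Prop := length (snd a) = ar L (fst a).

Definition rule_wf {L} (r : rule L) : Prop :=
  (forall a, In a (hpos r ++ hneg r ++ bpos r ++ bneg r) -> patom_wf a) /\
  length (hpos r ++ hneg r) + length (bpos r ++ bneg r) > 0.

Definition program (L : signature) := rule L -> Prop.
Definition is_program {L} (P : program L) : Prop := forall r, P r -> rule_wf r.

Definition prog_theory {L L'} (e : ext L L') (P : program L) : theory L' :=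
  fun f => exists r, P r /\ f = rename_form e (rule_form r).

Definition gatom (L : signature) := (Prd L * list (Cst L))%type.
Definition gatom_form {L} (a : gatom L) : form L := FAtom (fst a) (map TCst (snd a)).
Definition facts {L} (A : gatom L -> Prop) : theory L :=
  fun f => exists a, A a /\ f = gatom_form a.

(* At(P,U): atoms p(ε1,...,εn) over the universe U (names c_ε identified with ε) *)
Definition atom (L : signature) (U : Type) := (Prd L * list U)%type.
Definition in_At {L U} (a : atom L U) : Prop := length (snd a) = ar L (fst a).

Section Semantics.
Context {L : signature} {U : Type} (I : Cst L -> U).

Definition upd (s : nat -> U) (x : nat) (d : U) : nat -> U :=
  fun y => if Nat.eqb y x then d else s y.

Definition eval_term (s : nat -> U) (t : term L) : U :=
  match t with TVar x => s x | TCst c => I c end.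

Fixpoint csat (K : atom L U -> Prop) (s : nat -> U) (f : form L) : Prop :=
  match f with
  | FAtom p ts => K (p, map (eval_term s) ts)
  | FBot => False
  | FAnd g h => csat K s g /\ csat K s h
  | FOr g h => csat K s g \/ csat K s h
  | FImp g h => csat K s g -> csat K s h
  | FAll x g => forall d, csat K (upd s x d) g
  | FEx x g => exists d, csat K (upd s x d) g
  end.

Fixpoint qsat (J K : atom L U -> Prop) (s : nat -> U) (f : form L) : Prop :=
  match f with
  | FAtom p ts => J (p, map (eval_term s) ts)
  | FBot => False
  | FAnd g h => qsat J K s g /\ qsat J K s h
  | FOr g h => qsat J K s g \/ qsat J K s h
  | FImp g h => (~ qsat J K s g \/ qsat J K s h) /\ csat K s (FImp g h)
  | FAll x g => forall d, qsat J K (upd s x d) g /\ csat K (upd s x d) g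
  | FEx x g => exists d, qsat J K (upd s x d) g
  end.

Definition qmodel (J K : atom L U -> Prop) (G : theory L) : Prop :=
  forall f s, G f -> qsat J K s f.

Definition gas (G : theory L) (K : atom L U -> Prop) : Prop :=
  (forall a, K a -> in_At a) /\
  qmodel K K G /\
  forall J : atom L U -> Prop,
    (forall a, J a -> K a) -> (exists a, K a /\ ~ J a) -> ~ qmodel J K G.
End Semantics.

Definition same_gas {L} (G1 G2 : theory L) : Prop :=
  forall (U : Type), inhabited U ->
  forall (I : Cst L -> U) (K : atom L U -> Prop), gas I G1 K <-> gas I G2 K.

Definition uniform_equiv {L} (P1 P2 : program L) : Prop :=
  forall (L' : signature) (e : ext L L') (G : theory L'),
    factual_theory G ->
    same_gas (union (prog_theory e P1) G) (union (prog_theory e P2) G).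

(* Main.v *)
Require Import Defs.
From Stdlib Require Import List Arith Classical.
Import ListNotations.

Lemma persist {L U} (I : Cst L -> U) (J K : atom L U -> Prop) (HJK: forall a, J a -> K a) :
  forall f s, qsat I J K s f -> csat I K s f.
Proof.
  induction f; intros s H; simpl in *.
  - apply HJK; exact H.
  - exact H.
  - destruct H; split; eauto.
  - destruct H; [left|right]; eauto.
  - destruct H as [_ H]; exact H.
  - intro d; apply (H d).
  - destruct H as [d Hd]; exists d; eauto.
Qed.

Lemma mono {L U} (I : Cst L -> U) (J J' K : atom L U -> Prop) (HJ: forall a, J a -> J' a) (HJ'K: forall a, J' a -> K a) :
  forall f, factual f -> forall s, qsat I J K s f -> qsat I J' K s f.
Proof.
  induction 1 as [p ts| |f g Hf IHf Hg IHg|f g Hf IHf Hg IHg|f Hf IHf|x f Hf IHf|x f Hf IHf]; intros s H; simpl in *.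
  - auto.
  - auto.
  - destruct H; split; auto.
  - destruct H; [left|right]; auto.
  - destruct H as [_ H2]. split; [left; intro Hq; apply H2; eapply persist; eauto | exact H2].
  - intro d; destruct (H d); split; auto.
  - destruct H as [d Hd]; exists d; auto.
Qed.

Definition L2 (L' : signature) (U : Type) : signature := mkSig (Cst L' + U) (Prd L') (ar L').
Definition e2 {L L'} (e : ext L L') (U : Type) : ext L (L2 L' U).
Proof.
  refine (mkExt L (L2 L' U) (fun c => inl (ec e c)) (ep e) _ _ _).
  - intros c d H. injection H; intro H'. exact (ec_inj _ _ e c d H').
  - intros p q H; exact (ep_inj _ _ e p q H).
  - intro p; apply (ep_ar _ _ e).
Defined.
Definition I2 {L' U} (I : Cst L' -> U) : Cst (L2 L' U) -> U :=
  fun c => match c with inl c => I c | inr u => u end.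

Lemma map_tr {L L' U} (e : ext L L') (I : Cst L' -> U) s ts :
  map (eval_term (I2 I) s) (map (rename_term (e2 e U)) ts) = map (eval_term I s) (map (rename_term e) ts).
Proof. induction ts as [|[x|c] ts IH]; simpl; f_equal; auto. Qed.

Lemma tr_c {L L' U} (e : ext L L') (I : Cst L' -> U) (K : atom L' U -> Prop) :
  forall g s, csat (I2 I) K s (rename_form (e2 e U) g) <-> csat I K s (rename_form e g).
Proof.
  induction g; intros s; simpl.
  - rewrite map_tr. reflexivity.
  - tauto.
  - rewrite IHg1, IHg2; tauto.
  - rewrite IHg1, IHg2; tauto.
  - rewrite IHg1, IHg2; tauto.
  - split; intros H d; apply IHg, H.
  - split; intros [d H]; exists d; apply IHg, H.
Qed.

Lemma tr_q {L L' U} (e : ext L L') (I : Cst L' -> U) (J K : atom L' U -> Prop) :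
  forall g s, qsat (I2 I) J K s (rename_form (e2 e U) g) <-> qsat I J K s (rename_form e g).
Proof.
  induction g; intros s; simpl.
  - rewrite map_tr. reflexivity.
  - tauto.
  - rewrite IHg1, IHg2; tauto.
  - rewrite IHg1, IHg2; tauto.
  - rewrite IHg1, IHg2, (tr_c e I K g1), (tr_c e I K g2); tauto.
  - split; intros H d; destruct (H d) as [Ha Hb]; split; first [apply IHg; exact Ha | apply tr_c; exact Hb].
  - split; intros [d H]; exists d; apply IHg, H.
Qed.

Lemma tr_prog {L L' U} (e : ext L L') (I : Cst L' -> U) (J K : atom L' U -> Prop) (P : program L) :
  qmodel (I2 I) J K (prog_theory (e2 e U) P) <-> qmodel I J K (prog_theory e P).
Proof.
  split; intros H f s [r [Pr ->]].
  - apply tr_q. apply H. exists r; auto.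
  - apply tr_q. apply H. exists r; auto.
Qed.

Definition AS {L' U} (S : atom L' U -> Prop) : gatom (L2 L' U) -> Prop :=
  fun a => exists args, S (fst a, args) /\ snd a = map inr args.

Lemma gat {L' U} (I : Cst L' -> U) (J K : atom L' U -> Prop) s p (args : list U) :
  qsat (I2 I) J K s (@gatom_form (L2 L' U) (p, map inr args)) <-> J (p, args).
Proof.
  unfold gatom_form; simpl. rewrite !map_map.
  assert (E : map (fun x : U => eval_term (I2 I) s (@TCst (L2 L' U) (inr x))) args = args)
    by (induction args; simpl; f_equal; auto).
  rewrite E; reflexivity.
Qed.

Lemma facts_in {L' U} (I : Cst L' -> U) (J K S : atom L' U -> Prop) :
  (forall a, S a -> J a) -> qmodel (I2 I) J K (facts (AS S)).
Proof.
  intros H f s [[p cs] [[args [Sa Ea]] ->]]. simpl in *. subst cs.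
  apply (proj2 (gat I J K s p args)). apply H; exact Sa.
Qed.

Lemma facts_out {L' U} (u : U) (I : Cst L' -> U) (J K S : atom L' U -> Prop) :
  qmodel (I2 I) J K (facts (AS S)) -> forall a, S a -> J a.
Proof.
  intros H [p args] Sa.
  apply (gat I J K (fun _ => u)). apply H.
  exists (p, map inr args). split; [exists args; split; auto|reflexivity].
Qed.

Lemma AS_wf {L' U} (S K : atom L' U -> Prop) (HK : forall a, K a -> in_At a) (HS : forall a, S a -> K a) :
  forall a, AS S a -> length (snd a) = ar (L2 L' U) (fst a).
Proof.
  intros [p cs] [args [Sa E]]; simpl in *; subst cs.
  rewrite length_map. apply (HK _ (HS _ Sa)).
Qed.

Lemma key (L : signature) (P1 P2 : program L)
  (Hf : forall (L' : signature) (e : ext L L') (A : gatom L' -> Prop),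
     (forall a, A a -> length (snd a) = ar L' (fst a)) ->
     same_gas (union (prog_theory e P1) (facts A))
              (union (prog_theory e P2) (facts A)))
  (L' : signature) (e : ext L L') (G : theory L') (HG : factual_theory G)
  (U : Type) (Hinh : inhabited U) (I : Cst L' -> U) (K : atom L' U -> Prop) :
  gas I (union (prog_theory e P1) G) K -> gas I (union (prog_theory e P2) G) K.
Proof.
  destruct Hinh as [u]. intros [HK [HM Hmin]].
  assert (HP1 : qmodel I K K (prog_theory e P1)) by (intros f s Hp; apply HM; left; exact Hp).
  assert (Hg1 : gas (I2 I) (union (prog_theory (e2 e U) P1) (facts (AS K))) K).
  { split; [exact HK | split].
    - intros f s [Hp|Hfa].
      + apply (proj2 (tr_prog e I K K P1) HP1); exact Hp.
      + apply (facts_in I K K K (fun a h => h)); exact Hfa.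
    - intros J HJ [a [Ka nJa]] Hq. apply nJa.
      apply (facts_out u I J K K); [ intros f s Hfa; apply Hq; right; exact Hfa | exact Ka]. }
  apply (Hf (L2 L' U) (e2 e U) (AS K) (AS_wf K K HK (fun a h => h)) U (inhabits u) (I2 I) K) in Hg1.
  destruct Hg1 as [_ [HM2 _]].
  assert (HP2 : qmodel I K K (prog_theory e P2)).
  { apply (proj1 (tr_prog e I K K P2)). intros f s Hp; apply HM2; left; exact Hp. }
  split; [exact HK | split].
  - intros f s [Hp|Gf]; [apply HP2; exact Hp | apply HM; right; exact Gf].
  - intros J HJ Hex Hq.
    assert (NG : ~ gas (I2 I) (union (prog_theory (e2 e U) P1) (facts (AS J))) K).
    { intro Hg. apply (Hf (L2 L' U) (e2 e U) (AS J) (AS_wf J K HK HJ) U (inhabits u) (I2 I) K) in Hg.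
      destruct Hg as [_ [_ Hm]]. apply (Hm J HJ Hex).
      intros f s [Hp|Hfa].
      - apply (proj2 (tr_prog e I J K P2)); [intros f' s' Hp'; apply Hq; left; exact Hp' | exact Hp].
      - apply (facts_in I J K J (fun a h => h)); exact Hfa. }
    apply NG. split; [exact HK | split].
    + intros f s [Hp|Hfa].
      * apply (proj2 (tr_prog e I K K P1) HP1); exact Hp.
      * apply (facts_in I K K J HJ); exact Hfa.
    + intros J' HJ' Hex' Hq'. apply (Hmin J' HJ' Hex').
      assert (HJJ' : forall a, J a -> J' a).
      { apply (facts_out u I J' K J). intros f s Hfa; apply Hq'; right; exact Hfa. }
      intros f s [Hp|Gf].
      * apply (proj1 (tr_prog e I J' K P1)); [intros f' s' Hp'; apply Hq'; left; exact Hp' | exact Hp].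
      * apply (mono I J J' K HJJ' HJ' f (proj1 (HG f Gf))). apply Hq; right; exact Gf.
Qed.

Theorem mainTheorem18 (L : signature) (P1 P2 : program L)
  (H1 : is_program P1) (H2 : is_program P2) :
  uniform_equiv P1 P2 <->
  (forall (L' : signature) (e : ext L L') (A : gatom L' -> Prop),
     (forall a, A a -> length (snd a) = ar L' (fst a)) ->
     same_gas (union (prog_theory e P1) (facts A))
              (union (prog_theory e P2) (facts A))).
Proof.
  split.
  - intros HU L' e A HA. apply HU.
    intros f [a [Aa ->]]. split; [constructor | split].
    + unfold sentence, gatom_form; simpl. induction (snd a); simpl; auto.
    + unfold gatom_form; simpl. rewrite length_map. apply HA. exact Aa.
  - intros Hf L' e G HG U Hinh I K. split.
    + apply key; assumption.
    + apply key; [|assumption|assumption].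
      intros L'' e' A HA U' Hi I' K'. symmetry. apply Hf; assumption.
Qed.
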